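(* Let $X=\mathbb{P}^{n_1}\times\dots\times\mathbb{P}^{n_\ell}$ over an algebraically closed field $k$ of characteristic zero with $\ell\ge3$ (and all $n_i\geq 1$). Then the ample line bundle $\mathcal{O}_X(1,1,\dots,1)$ is not determinantally presented.
   Context: $\mathcal{O}_X(\mathbf{m})$ denotes $\mathcal{O}_{\mathbb{P}^{n_1}}(m_1)\boxtimes\cdots\boxtimes\mathcal{O}_{\mathbb{P}^{n_\ell}}(m_\ell)$. A matrix of linear forms $\Omega$ is $1$-generic if $P\Omega Q$ has no zero entry for all invertible $P,Q$ over $k$. A line bundle $L$ is determinantally presented if its complete linear series embeds $X$ in $\mathbb{P}(H^0(X,L))$ and the homogeneous ideal of $X$ there is generated by the $2\times2$ minors of a $1$-generic matrix of linear forms. *)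

(* Defs.v *)
From HB Require Import structures.
From mathcomp Require Import all_boot all_algebra.
From mathcomp Require Import mpoly.
Set Implicit Arguments. Unset Strict Implicit. Unset Printing Implicit Defensive.
Import GRing.Theory.
Local Open Scope ring_scope.

(* X = P^{n_0} x ... x P^{n_{l-1}}, indices i : 'I_l.
   A basis of H^0(X, O(1,...,1)) = k^{n_0+1} (x) ... (x) k^{n_{l-1}+1}
   is indexed by multi-indices e : forall i, 'I_(n i).+1. *)
Definition multiidx (l : nat) (n : 'I_l -> nat) : finType :=
  {dffun forall i : 'I_l, 'I_(n i).+1}.

Definition ncoord (l : nat) (n : 'I_l -> nat) : nat := #|multiidx n|.

(* the complete linear series of O(1,...,1): the Segre map on affine cones,
   sending (v_0, ..., v_{l-1}) to the tensor v_0 (x) ... (x) v_{l-1}. *)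
Definition segre (k : fieldType) (l : nat) (n : 'I_l -> nat)
  (v : forall i : 'I_l, 'I_(n i).+1 -> k) : 'I_(ncoord n) -> k :=
  fun j => \prod_(i < l) v i ((@enum_val (multiidx n) predT j) i).

(* homogeneous ideal of the image of X in P(H^0(X,L)): since k is infinite,
   f lies in it iff f vanishes on the affine cone over X. *)
Definition in_segre_ideal (k : fieldType) (l : nat) (n : 'I_l -> nat)
  (f : {mpoly k[ncoord n]}) : Prop :=
  forall v : forall i : 'I_l, 'I_(n i).+1 -> k, f.@[segre v] = 0.

Definition minor2 (R : comRingType) (a b : nat) (Om : 'M[R]_(a, b))
  (i1 i2 : 'I_a) (j1 j2 : 'I_b) : R :=
  Om i1 j1 * Om i2 j2 - Om i1 j2 * Om i2 j1.

Definition in_minor_ideal (R : comRingType) (a b : nat) (Om : 'M[R]_(a, b))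
  (f : R) : Prop :=
  exists c : 'I_a -> 'I_a -> 'I_b -> 'I_b -> R,
    f = \sum_(i1 < a) \sum_(i2 < a) \sum_(j1 < b) \sum_(j2 < b)
          c i1 i2 j1 j2 * minor2 Om i1 i2 j1 j2.

Definition linear_forms_mx (k : fieldType) (N a b : nat)
  (Om : 'M[{mpoly k[N]}]_(a, b)) : Prop :=
  forall i j, Om i j \is 1.-homog.

Definition one_generic (k : fieldType) (N a b : nat)
  (Om : 'M[{mpoly k[N]}]_(a, b)) : Prop :=
  forall (P : 'M[k]_a) (Q : 'M[k]_b), P \in unitmx -> Q \in unitmx ->
    forall i j,
      (map_mx (fun x => x%:MP) P *m Om *m map_mx (fun x => x%:MP) Q) i j != 0.

Definition O1_det_presented (k : fieldType) (l : nat) (n : 'I_l -> nat) : Prop :=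
  exists (a b : nat) (Om : 'M[{mpoly k[ncoord n]}]_(a, b)),
    linear_forms_mx Om /\ one_generic Om /\
    (forall f, in_segre_ideal f <-> in_minor_ideal Om f).

(* Main.v *)
Require Import Defs.
From HB Require Import structures.
From mathcomp Require Import all_boot all_algebra.
From mathcomp Require Import mpoly.
From mathcomp Require Import ring.
Local Open Scope ring_scope.
Import GRing.Theory.
Set Implicit Arguments. Unset Strict Implicit. Unset Printing Implicit Defensive.
Section Alg.
Variable K : fieldType.
Variables a b : nat.

Definition rk1 (A : 'I_a -> 'I_b -> K) :=
  forall r1 r2 c1 c2, A r1 c1 * A r2 c2 - A r1 c2 * A r2 c1 = 0.

Definition det2 m (x y : 'I_m -> K) i1 i2 := x i1 * y i2 - x i2 * y i1.

Lemma rk1_ext (A B : 'I_a -> 'I_b -> K) :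
  (forall i j, A i j = B i j) -> rk1 A -> rk1 B.
Proof. by move=> e h r1 r2 c1 c2; rewrite -!e. Qed.

Lemma rk1_decomp A : rk1 A ->
  exists (g : 'I_a -> K) (d : 'I_b -> K), forall i j, A i j = g i * d j.
Proof.
move=> h; case: (boolP [exists r, exists c, A r c != 0]).
  case/existsP=> r /existsP [c nz].
  exists (fun i => A i c), (fun j => A r j / A r c) => i j.
  have := h i r j c => /eqP; rewrite subr_eq0 => /eqP e.
  by apply: (mulIf nz); rewrite mulrA -e mulfVK.
move=> hn; exists (fun _ => 0), (fun _ => 0) => i j; rewrite mul0r.
apply/eqP; apply: contraNT hn => nz; apply/existsP; exists i; apply/existsP; by exists j.
Qed.

Lemma minor_sum2 (g g' : 'I_a -> K) (d d' : 'I_b -> K) r1 r2 c1 c2 :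
  (g r1 * d c1 + g' r1 * d' c1) * (g r2 * d c2 + g' r2 * d' c2)
  - (g r1 * d c2 + g' r1 * d' c2) * (g r2 * d c1 + g' r2 * d' c1)
  = det2 g g' r1 r2 * det2 d d' c1 c2.
Proof. rewrite /det2; ring. Qed.

Lemma par_trans m (be d d' : 'I_m -> K) c0 : be c0 != 0 ->
  (forall c1 c2, det2 be d c1 c2 = 0) -> (forall c1 c2, det2 be d' c1 c2 = 0) ->
  forall c1 c2, det2 d d' c1 c2 = 0.
Proof.
move=> nz h1 h2 c1 c2.
have e1 : forall j, d j * be c0 = d c0 * be j.
  by move=> j; have := h1 j c0; rewrite /det2 => /eqP; rewrite subr_eq0 => /eqP e; rewrite mulrC -e mulrC.
have e2 : forall j, d' j * be c0 = d' c0 * be j.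
  by move=> j; have := h2 j c0; rewrite /det2 => /eqP; rewrite subr_eq0 => /eqP e; rewrite mulrC -e mulrC.
apply: (mulIf (mulf_neq0 nz nz)); rewrite mul0r /det2.
have -> : (d c1 * d' c2 - d c2 * d' c1) * (be c0 * be c0) =
  (d c1 * be c0) * (d' c2 * be c0) - (d c2 * be c0) * (d' c1 * be c0) by ring.
rewrite !e1 !e2; ring.
Qed.

Lemma prod_split_or (T T' : finType) (x : T -> K) (y : T' -> K) :
  (forall i j, x i * y j = 0) -> (forall i, x i = 0) \/ (forall j, y j = 0).
Proof.
move=> h; case: (boolP [exists i, x i != 0]).
  case/existsP=> i nz; right=> j; have := h i j => /eqP; rewrite mulf_eq0 (negbTE nz) /= => /eqP //.
move=> hn; left=> i; apply/eqP; apply: contraNT hn => nz; apply/existsP; by exists i.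
Qed.

Lemma face_id (a11 a22 a12 a21 b11 b22 b12 b21 c11 c22 c12 c21 d11 d22 d12 d21 : K) :
  2 * ((a11 + d11) * (a22 + d22) - (a12 + d12) * (a21 + d21)) =
  ((a11 + b11 + c11 + d11) * (a22 + b22 + c22 + d22) - (a12 + b12 + c12 + d12) * (a21 + b21 + c21 + d21))
  + ((a11 - b11 - c11 + d11) * (a22 - b22 - c22 + d22) - (a12 - b12 - c12 + d12) * (a21 - b21 - c21 + d21))
  - 2 * ((b11 + c11) * (b22 + c22) - (b12 + c12) * (b21 + c21)).
Proof. ring. Qed.

Lemma face (A B C D : 'I_a -> 'I_b -> K) : (2:K) != 0 ->
  rk1 (fun i j => B i j + C i j) ->
  rk1 (fun i j => A i j + B i j + C i j + D i j) ->
  rk1 (fun i j => A i j - B i j - C i j + D i j) ->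
  rk1 (fun i j => A i j + D i j).
Proof.
move=> h2 hY hP hM r1 r2 c1 c2.
have := hY r1 r2 c1 c2; have := hP r1 r2 c1 c2; have := hM r1 r2 c1 c2.
move=> /= e1 e2 e3; apply: (mulfI h2); rewrite mulr0.
rewrite (face_id _ _ _ _ (B r1 c1) (B r2 c2) (B r1 c2) (B r2 c1) (C r1 c1) (C r2 c2) (C r1 c2) (C r2 c1)) e1 e2 e3; ring.
Qed.

Lemma alg (A B C E D12 D13 D23 : 'I_a -> 'I_b -> K) : (2:K) != 0 ->
  rk1 A -> rk1 B -> rk1 C -> rk1 E -> rk1 D12 -> rk1 D13 -> rk1 D23 ->
  rk1 (fun i j => A i j + B i j) -> rk1 (fun i j => A i j + C i j) ->
  rk1 (fun i j => A i j + E i j) ->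
  rk1 (fun i j => A i j + B i j + C i j + D12 i j) ->
  rk1 (fun i j => A i j - B i j - C i j + D12 i j) ->
  rk1 (fun i j => A i j + B i j + E i j + D13 i j) ->
  rk1 (fun i j => A i j - B i j - E i j + D13 i j) ->
  rk1 (fun i j => A i j + C i j + E i j + D23 i j) ->
  rk1 (fun i j => A i j - C i j - E i j + D23 i j) ->
  rk1 (fun i j => A i j + D12 i j) \/ rk1 (fun i j => A i j + D13 i j)
  \/ rk1 (fun i j => A i j + D23 i j).
Proof.
move=> h2 hA hB hC hE h12 h13 h23 hAB hAC hAE f1 f1' f2 f2' f3 f3'.
case: (boolP [exists r, exists c, A r c != 0]); last first.
  move=> hn; left; apply: rk1_ext h12 => i j.
  have -> : A i j = 0.
    by apply/eqP; apply: contraNT hn => nz; apply/existsP; exists i; apply/existsP; exists j.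
  by rewrite add0r.
case/existsP=> r0 /existsP [c0 nz].
have [al [be eA]] := rk1_decomp hA.
have nzal : al r0 != 0 by move: nz; rewrite eA; apply: contraNneq => ->; rewrite mul0r.
have nzbe : be c0 != 0 by move: nz; rewrite eA; apply: contraNneq => ->; rewrite mulr0.
pose R (X : 'I_a -> 'I_b -> K) := exists g d, (forall i j, X i j = g i * d j) /\ forall c1 c2, det2 be d c1 c2 = 0.
pose Cc (X : 'I_a -> 'I_b -> K) := exists g d, (forall i j, X i j = g i * d j) /\ forall r1 r2, det2 al g r1 r2 = 0.
have typ : forall X, rk1 X -> rk1 (fun i j => A i j + X i j) -> R X \/ Cc X.
  move=> X hX hAX; have [g [d eX]] := rk1_decomp hX.
  have : forall r12 c12, det2 al g r12.1 r12.2 * det2 be d c12.1 c12.2 = 0.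
    move=> [r1 r2] [c1 c2] /=; rewrite -minor_sum2 -!eA -!eX; exact: hAX.
  case/(prod_split_or (x := fun r12 : 'I_a * 'I_a => det2 al g r12.1 r12.2)
     (y := fun c12 : 'I_b * 'I_b => det2 be d c12.1 c12.2)) => h.
    by right; exists g, d; split=> // r1 r2; exact: (h (r1, r2)).
  by left; exists g, d; split=> // c1 c2; exact: (h (c1, c2)).
have sumR : forall X Y, R X -> R Y -> rk1 (fun i j => X i j + Y i j).
  move=> X Y [g [d [eX hX]]] [g' [d' [eY hY]]] r1 r2 c1 c2.
  rewrite !eX !eY minor_sum2 (par_trans nzbe hX hY) mulr0 //.
have sumC : forall X Y, Cc X -> Cc Y -> rk1 (fun i j => X i j + Y i j).
  move=> X Y [g [d [eX hX]]] [g' [d' [eY hY]]] r1 r2 c1 c2.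
  rewrite !eX !eY minor_sum2 (par_trans nzal hX hY) mul0r //.
have F12 : rk1 (fun i j => B i j + C i j) -> rk1 (fun i j => A i j + D12 i j).
  by move=> h; exact: (@face A B C D12 h2 h f1 f1').
have F13 : rk1 (fun i j => B i j + E i j) -> rk1 (fun i j => A i j + D13 i j).
  by move=> h; exact: (@face A B E D13 h2 h f2 f2').
have F23 : rk1 (fun i j => C i j + E i j) -> rk1 (fun i j => A i j + D23 i j).
  by move=> h; exact: (@face A C E D23 h2 h f3 f3').
case: (typ B hB hAB) => tB; case: (typ C hC hAC) => tC; case: (typ E hE hAE) => tE.
- by left; apply: F12; apply: sumR.
- by left; apply: F12; apply: sumR.
- by right; left; apply: F13; apply: sumR.
- by right; right; apply: F23; apply: sumC.
- by right; right; apply: F23; apply: sumR.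
- by right; left; apply: F13; apply: sumC.
- by left; apply: F12; apply: sumC.
- by left; apply: F12; apply: sumC.
Qed.
End Alg.
Unset Implicit Arguments.
Section Lin.
Variable k : fieldType.
Variable N : nat.

Lemma meval_lin (p : {mpoly k[N]}) (x y : 'I_N -> k) (c : k) :
  p \is 1.-homog ->
  p.@[fun j => x j + c * y j] = p.@[x] + c * p.@[y].
Proof.
move=> hp; rewrite !mevalE big_distrr -big_split /=.
apply: eq_big_seq => m hm.
have /eqP/mdeg1P [i /eqP ->] := dhomog_mf hp hm.
rewrite -!mevalX !mevalXU; ring.
Qed.
End Lin.

Section Geo.
Variable k : fieldType.
Variable l : nat.
Variable n : 'I_l -> nat.
Hypothesis hn : forall i, (1 <= n i)%N.

Definition d1 i : 'I_(n i).+1 := inord 1.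
Lemma d1_neq0 i : d1 i != ord0.
Proof. by rewrite /d1 -val_eqE /= inordK // ltnS hn. Qed.

Definition mb (d : 'I_l -> bool) : multiidx n :=
  finfun (fun i : 'I_l => (if d i then d1 i else ord0) : 'I_(n i).+1).
Lemma mbE d i : mb d i = if d i then d1 i else ord0.
Proof. by rewrite /mb ffunE. Qed.

Definition J d : 'I_(ncoord n) := enum_rank (mb d).

Lemma segreJ (v : forall i : 'I_l, 'I_(n i).+1 -> k) d :
  segre v (J d) = \prod_(i < l) v i (mb d i).
Proof. by rewrite /segre /J enum_rankK. Qed.

Definition d0 : 'I_l -> bool := fun _ => false.
Definition dp (p : 'I_l) : 'I_l -> bool := fun i => i == p.
Definition dpq (p q : 'I_l) : 'I_l -> bool := fun i => (i == p) || (i == q).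

Definition Eb d : forall i, 'I_(n i).+1 -> k := fun i x => (x == mb d i)%:R.
Definition Gv (c : 'I_l -> k * k) : forall i, 'I_(n i).+1 -> k :=
  fun i x => (c i).1 * (x == ord0)%:R + (c i).2 * (x == d1 i)%:R.

Lemma EbE (d : 'I_l -> bool) (i : 'I_l) (x : 'I_(n i).+1) : Eb d i x = if d i then (x == d1 i)%:R else (x == ord0)%:R.
Proof. by rewrite /Eb mbE; case: (d i). Qed.

Lemma Eb_eq d d' : (forall i, d i = d' i) -> segre (Eb d) (J d') = 1.
Proof.
move=> h; rewrite segreJ big1 // => i _; by rewrite /Eb !mbE h eqxx.
Qed.

Lemma Eb_neq d d' i0 : d i0 != d' i0 -> segre (Eb d) (J d') = 0.
Proof.
move=> h; rewrite segreJ (bigD1 i0) //= /Eb !mbE.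
move: h; case: (d i0); case: (d' i0) => //= _.
  by rewrite eq_sym (negbTE (d1_neq0 _)) mul0r.
by rewrite (negbTE (d1_neq0 _)) mul0r.
Qed.

Definition rest1 (v : forall i, 'I_(n i).+1 -> k) p (j : 'I_(ncoord n)) :=
  \prod_(i | i != p) v i ((@enum_val (multiidx n) predT j) i).
Definition rest2 (v : forall i, 'I_(n i).+1 -> k) p q (j : 'I_(ncoord n)) :=
  \prod_(i | (i != p) && (i != q)) v i ((@enum_val (multiidx n) predT j) i).

Lemma seg_split1 v p j :
  segre v j = v p ((@enum_val (multiidx n) predT j) p) * rest1 v p j.
Proof. by rewrite /segre (bigD1 p). Qed.

Lemma seg_split2 v p q j : p != q ->
  segre v j = v p ((@enum_val (multiidx n) predT j) p) *
     v q ((@enum_val (multiidx n) predT j) q) * rest2 v p q j.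
Proof.
move=> pq; rewrite /segre (bigD1 p) //= (bigD1 q) /=; last by rewrite eq_sym.
by rewrite mulrA.
Qed.

Lemma rest1_eq v w p j : (forall i x, i != p -> v i x = w i x) ->
  rest1 v p j = rest1 w p j.
Proof. by move=> h; apply: eq_bigr => i hi; rewrite h. Qed.

Lemma rest2_eq v w p q j : (forall i x, i != p -> i != q -> v i x = w i x) ->
  rest2 v p q j = rest2 w p q j.
Proof. by move=> h; apply: eq_bigr => i /andP [h1 h2]; rewrite h. Qed.

Definition cpen (p : 'I_l) : 'I_l -> k * k :=
  fun i => if i == p then (1, 1) else (1, 0).
Definition cface (p q : 'I_l) (s : k) : 'I_l -> k * k :=
  fun i => if i == p then (1, s) else if i == q then (1, s) else (1, 0).

Lemma seg_pen p j :
  segre (Gv (cpen p)) j = segre (Eb d0) j + 1 * segre (Eb (dp p)) j.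
Proof.
rewrite !(seg_split1 _ p j).
rewrite (@rest1_eq (Gv (cpen p)) (Eb d0)); last first.
  by move=> i x hi; rewrite /Gv EbE /cpen /d0 (negbTE hi) /=; ring.
rewrite (@rest1_eq (Eb (dp p)) (Eb d0)); last first.
  by move=> i x hi; rewrite !EbE /dp /d0 (negbTE hi).
rewrite /Gv !EbE /cpen /d0 /dp eqxx /=; ring.
Qed.

Lemma seg_face p q s j : p != q ->
  segre (Gv (cface p q s)) j =
  ((segre (Eb d0) j + s * segre (Eb (dp p)) j) + s * segre (Eb (dp q)) j)
  + (s * s) * segre (Eb (dpq p q)) j.
Proof.
move=> pq; have qp : q != p by rewrite eq_sym.
rewrite !(seg_split2 _ p q j pq).
rewrite (@rest2_eq (Gv (cface p q s)) (Eb d0)); last first.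
  by move=> i x h1 h2; rewrite /Gv EbE /cface /d0 (negbTE h1) (negbTE h2) /=; ring.
rewrite (@rest2_eq (Eb (dp p)) (Eb d0)); last first.
  by move=> i x h1 h2; rewrite !EbE /dp /d0 (negbTE h1).
rewrite (@rest2_eq (Eb (dp q)) (Eb d0)); last first.
  by move=> i x h1 h2; rewrite !EbE /dp /d0 (negbTE h2).
rewrite (@rest2_eq (Eb (dpq p q)) (Eb d0)); last first.
  by move=> i x h1 h2; rewrite !EbE /dpq /d0 (negbTE h1) (negbTE h2).
rewrite /Gv !EbE /cface /d0 /dp /dpq !eqxx (negbTE pq) (negbTE qp) /=; ring.
Qed.

Definition quad (p q : 'I_l) : {mpoly k[ncoord n]} :=
  'X_(J d0) * 'X_(J (dpq p q)) - 'X_(J (dp p)) * 'X_(J (dp q)).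

Lemma prod_mb2 (v : forall i, 'I_(n i).+1 -> k) d p q : p != q ->
  (forall i, i != p -> i != q -> d i = false) ->
  \prod_(i < l) v i (mb d i) =
  v p (mb d p) * v q (mb d q) * \prod_(i | (i != p) && (i != q)) v i ord0.
Proof.
move=> pq hd; rewrite (bigD1 p) //= (bigD1 q) /=; last by rewrite eq_sym.
rewrite mulrA; congr (_ * _); apply: eq_bigr => i /andP [h1 h2].
by rewrite mbE hd.
Qed.

Lemma quad_segre p q v : p != q -> (quad p q).@[segre v] = 0.
Proof.
move=> pq; have qp : q != p by rewrite eq_sym.
rewrite /quad mevalB !mevalM !mevalXU !segreJ.
rewrite !(prod_mb2 v _ p q pq); try by move=> i h1 h2; rewrite /d0 /dp /dpq ?(negbTE h1) ?(negbTE h2).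
rewrite !mbE /d0 /dp /dpq !eqxx (negbTE pq) (negbTE qp) /=; ring.
Qed.

Lemma quad_bad p q : p != q ->
  (quad p q).@[fun j => segre (Eb d0) j + 1 * segre (Eb (dpq p q)) j] = 1.
Proof.
move=> pq; have qp : q != p by rewrite eq_sym.
rewrite /quad mevalB !mevalM !mevalXU.
rewrite (@Eb_eq d0 d0) // (@Eb_eq (dpq p q) (dpq p q)) //.
rewrite (@Eb_neq (dpq p q) d0 p); last by rewrite /dpq /d0 eqxx.
rewrite (@Eb_neq d0 (dpq p q) p); last by rewrite /dpq /d0 eqxx.
rewrite (@Eb_neq d0 (dp p) p); last by rewrite /dp /d0 eqxx.
rewrite (@Eb_neq d0 (dp q) q); last by rewrite /dp /d0 eqxx.
rewrite (@Eb_neq (dpq p q) (dp p) q); last by rewrite /dp /dpq eqxx (negbTE qp) orbT.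
rewrite (@Eb_neq (dpq p q) (dp q) p); last by rewrite /dp /dpq eqxx (negbTE pq).
ring.
Qed.
End Geo.
Lemma minor_in_ideal (R : comRingType) a b (Om : 'M[R]_(a, b)) r1 r2 c1 c2 :
  in_minor_ideal Om (minor2 Om r1 r2 c1 c2).
Proof.
exists (fun i1 i2 j1 j2 => ((i1 == r1) && (i2 == r2) && (j1 == c1) && (j2 == c2))%:R).
rewrite (bigD1 r1) //= [X in _ + X]big1 ?addr0; last first.
  move=> i1 /negbTE h; apply: big1 => i2 _; apply: big1 => j1 _; apply: big1 => j2 _.
  by rewrite h /= mul0r.
rewrite (bigD1 r2) //= [X in _ + X]big1 ?addr0; last first.
  move=> i2 /negbTE h; apply: big1 => j1 _; apply: big1 => j2 _.
  by rewrite h andbF /= mul0r.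
rewrite (bigD1 c1) //= [X in _ + X]big1 ?addr0; last first.
  move=> j1 /negbTE h; apply: big1 => j2 _.
  by rewrite h andbF /= mul0r.
rewrite (bigD1 c2) //= [X in _ + X]big1 ?addr0; last first.
  by move=> j2 /negbTE h; rewrite h andbF /= mul0r.
by rewrite !eqxx /= mul1r.
Qed.

Section Main.
Variable k : fieldType.
Variable l : nat.
Variable n : 'I_l -> nat.
Hypothesis hn : forall i, (1 <= n i)%N.
Variables a b : nat.
Variable Om : 'M[{mpoly k[ncoord n]}]_(a, b).
Hypothesis hlin : linear_forms_mx Om.
Hypothesis hiff : forall f, in_segre_ideal f <-> in_minor_ideal Om f.

Definition Phi (v : 'I_(ncoord n) -> k) : 'I_a -> 'I_b -> k :=
  fun i j => (Om i j).@[v].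

Lemma fact1 v : rk1 (Phi (segre v)).
Proof.
move=> r1 r2 c1 c2.
have := (proj2 (hiff _) (minor_in_ideal _ _ _ Om r1 r2 c1 c2)) v.
by rewrite /minor2 mevalB !mevalM.
Qed.

Lemma fact2 T f : rk1 (Phi T) -> in_minor_ideal Om f -> f.@[T] = 0.
Proof.
move=> hT [c ->].
rewrite !(big_morph _ (mevalD T) (meval0 T)).
apply: big1 => i1 _; rewrite !(big_morph _ (mevalD T) (meval0 T)).
apply: big1 => i2 _; rewrite !(big_morph _ (mevalD T) (meval0 T)).
apply: big1 => j1 _; rewrite !(big_morph _ (mevalD T) (meval0 T)).
apply: big1 => j2 _.
rewrite mevalM /minor2 mevalB !mevalM.
by have := hT i1 i2 j1 j2; rewrite /Phi => ->; rewrite mulr0.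
Qed.


Definition SE d : 'I_(ncoord n) -> k := segre (Eb k l n d).
Definition M d := Phi (SE d).

Lemma pen p : rk1 (fun i j => M (d0 l) i j + M (dp l p) i j).
Proof.
apply: (rk1_ext _ (fact1 (Gv k l n (cpen k l p)))) => i j.
rewrite /Phi (@meval_eq _ _ _ (fun j => SE (d0 l) j + 1 * SE (dp l p) j)).
  by rewrite meval_lin ?mul1r //.
by move=> j0; rewrite seg_pen.
Qed.

Lemma facelem p q (s : k) : p != q ->
  rk1 (fun i j => M (d0 l) i j + s * M (dp l p) i j + s * M (dp l q) i j
                  + (s * s) * M (dpq l p q) i j).
Proof.
move=> pq; apply: (rk1_ext _ (fact1 (Gv k l n (cface k l p q s)))) => i j.
rewrite /Phi (@meval_eq _ _ _ (fun j => ((SE (d0 l) j + s * SE (dp l p) j)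
   + s * SE (dp l q) j) + (s * s) * SE (dpq l p q) j)); last first.
  by move=> j0; rewrite seg_face.
have e1 := meval_lin _ _ (Om i j) (fun j => (SE (d0 l) j + s * SE (dp l p) j)
   + s * SE (dp l q) j) (SE (dpq l p q)) (s * s) (hlin i j).
simpl in e1; rewrite e1.
have e2 := meval_lin _ _ (Om i j) (fun j => SE (d0 l) j + s * SE (dp l p) j)
   (SE (dp l q)) s (hlin i j).
simpl in e2; rewrite e2.
by rewrite meval_lin.
Qed.

Lemma bad p q : p != q ->
  rk1 (fun i j => M (d0 l) i j + M (dpq l p q) i j) -> False.
Proof.
move=> pq h.
have hT : rk1 (Phi (fun j => SE (d0 l) j + 1 * SE (dpq l p q) j)).
  by apply: (rk1_ext _ h) => i j; rewrite /Phi meval_lin ?mul1r.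
have hf : in_minor_ideal Om (quad k l n p q).
  by apply/hiff => v; exact: quad_segre.
have := fact2 _ _ hT hf; rewrite /SE quad_bad //.
by move/eqP; rewrite oner_eq0.
Qed.

Hypothesis h2 : (2:k) != 0.
Hypothesis hl : (3 <= l)%N.

Lemma face_p p q : p != q ->
  rk1 (fun i j => M (d0 l) i j + M (dp l p) i j + M (dp l q) i j + M (dpq l p q) i j).
Proof.
move=> pq; apply: (rk1_ext _ (facelem p q 1 pq)) => i j /=; ring.
Qed.

Lemma face_m p q : p != q ->
  rk1 (fun i j => M (d0 l) i j - M (dp l p) i j - M (dp l q) i j + M (dpq l p q) i j).
Proof.
move=> pq; apply: (rk1_ext _ (facelem p q (-1) pq)) => i j /=; ring.
Qed.

Lemma contra : False.
Proof.
have l0 : (0 < l)%N by apply: leq_trans hl.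
have l1 : (1 < l)%N by apply: leq_trans hl.
have l2 : (2 < l)%N by [].
pose i0 : 'I_l := Ordinal l0.
pose i1 : 'I_l := Ordinal l1.
pose i2 : 'I_l := Ordinal l2.
have n01 : i0 != i1 by rewrite -val_eqE.
have n02 : i0 != i2 by rewrite -val_eqE.
have n12 : i1 != i2 by rewrite -val_eqE.
have := @alg k a b (M (d0 l)) (M (dp l i0)) (M (dp l i1)) (M (dp l i2))
  (M (dpq l i0 i1)) (M (dpq l i0 i2)) (M (dpq l i1 i2)) h2
  (fact1 _) (fact1 _) (fact1 _) (fact1 _) (fact1 _) (fact1 _) (fact1 _)
  (pen i0) (pen i1) (pen i2)
  (face_p _ _ n01) (face_m _ _ n01) (face_p _ _ n02) (face_m _ _ n02) (face_p _ _ n12) (face_m _ _ n12).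
case=> [h|[h|h]]; [exact: (bad _ _ n01 h) | exact: (bad _ _ n02 h) | exact: (bad _ _ n12 h)].
Qed.

End Main.

Theorem proposition4p2 (k : closedFieldType) (l : nat) (n : 'I_l -> nat) :
  [pchar k] =i pred0 -> (3 <= l)%N -> (forall i, (1 <= n i)%N) ->
  ~ O1_det_presented k n.
Proof.
move=> hch hl hn [a [b [Om [hlin [_ hiff]]]]].
have h2 : (2:k) != 0 by rewrite ((pcharf0P k).1 hch 2).
exact: (@contra k l n hn a b Om hlin hiff h2 hl).
Qed.
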